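(* For every $h\in R$, the binary representation of $h$ does not contain $10000$ as a contiguous substring.
   Context: Stern's sequence $(a(n))_{n\ge0}$: $a(0)=0$, $a(1)=1$, $a(2n)=a(n)$, $a(2n+1)=a(n)+a(n+1)$; $s(n)=a(n+1)$ for $n\ge0$. $R$ is the set of record-setters of $s$, i.e. indices $v\ge0$ with $s(i)<s(v)$ for all $i<v$. The binary representation of a positive integer has no leading zeros; $0$ is represented by the string $0$. *)

(* Defs.v *)
From Stdlib Require Import PArith NArith.
From mathcomp Require Import all_boot.
Set Implicit Arguments. Unset Strict Implicit. Unset Printing Implicit Defensive.

(* Stern's diatomic sequence a : nat -> nat, a(0)=0, a(1)=1, a(2n)=a(n),
   a(2n+1)=a(n)+a(n+1).  Computed via the pair (a m, a (m+1)) by structural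
   recursion on the binary representation of m >= 1. *)
Fixpoint stern_pair (p : positive) : nat * nat :=
  match p with
  | xH => (1, 1)
  | xO q => let '(x, y) := stern_pair q in (x, x + y)
  | xI q => let '(x, y) := stern_pair q in (x + y, y)
  end.

Definition stern (n : nat) : nat :=
  match N.of_nat n with
  | N0 => 0
  | Npos p => (stern_pair p).1
  end.

Definition s (n : nat) : nat := stern n.+1.

Definition R (v : nat) : Prop := forall i, i < v -> s i < s v.

(* binary representation, most significant bit first, true = 1;
   0 is represented by the string "0" *)
Fixpoint pos_bits (p : positive) : seq bool :=
  match p with
  | xH => [:: true]
  | xO q => rcons (pos_bits q) false
  | xI q => rcons (pos_bits q) true
  end.

Definition bin (n : nat) : seq bool :=
  match N.of_nat n with
  | N0 => [:: false]
  | Npos p => pos_bits p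
  end.

Lemma stern0 : stern 0 = 0. Proof. by []. Qed.
Lemma stern1 : stern 1 = 1. Proof. by []. Qed.
Example stern_vals : map stern (iota 0 10) = [:: 0; 1; 1; 2; 1; 3; 2; 3; 1; 4].
Proof. by vm_compute. Qed.
Example stern_rec : all (fun n => (stern n.*2 == stern n) && (stern n.*2.+1 == stern n + stern n.+1)) (iota 0 200).
Proof. by vm_compute. Qed.
Example bin_vals : bin 6 = [:: true; true; false] /\ bin 0 = [:: false].
Proof. by vm_compute. Qed.

(* Main.v *)
Require Import Defs.
From Stdlib Require Import PArith NArith Lia.
From mathcomp Require Import all_boot zify.

Definition sternN (m : N) : nat :=
  match m with N0 => 0 | Npos p => (stern_pair p).1 end.

Lemma stern_N n : stern n = sternN (N.of_nat n).
Proof. by []. Qed.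

Lemma pair_succ p : (stern_pair (Pos.succ p)).1 = (stern_pair p).2.
Proof.
elim: p => [q IH|q IH|] //=.
- move: IH; case: (stern_pair q) => x y; case: (stern_pair (Pos.succ q)) => a b /= ->.
  by [].
- by case: (stern_pair q).
Qed.

Lemma sternN_double m : sternN (N.double m) = sternN m.
Proof. case: m => // p /=; by case: (stern_pair p). Qed.

Lemma sternN_sdouble m : sternN (N.succ_double m) = sternN m + sternN (N.succ m).
Proof.
case: m => // p /=; rewrite pair_succ; by case: (stern_pair p).
Qed.

Lemma stern_dbl n : stern (2 * n) = stern n.
Proof. by rewrite !stern_N Nat2N.inj_double sternN_double. Qed.

Lemma stern_dblS n : stern (2 * n).+1 = stern n + stern n.+1.
Proof.
have -> : (2 * n).+1 = ((2 * n)%coq_nat).+1 by [].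
by rewrite !stern_N Nat2N.inj_succ_double sternN_sdouble Nat2N.inj_succ.
Qed.

Definition num (w : seq bool) : nat := foldl (fun n (b : bool) => 2 * n + b) 0 w.

Definition step (v : nat * nat) (b : bool) : nat * nat :=
  if b then (v.1 + v.2, v.2) else (v.1, v.1 + v.2).

Definition F (w : seq bool) := foldl step (0, 1) w.

Lemma F_num w : (stern (num w), stern (num w).+1) = F w.
Proof.
elim/last_ind: w => [|w b IH] //.
rewrite /num /F !foldl_rcons -/(num w) -/(F w) -IH /step.
case: b => /=.
- have -> : (2 * num w + 1).+1 = 2 * (num w).+1 by lia.
  by rewrite addn1 stern_dblS stern_dbl.
- have -> : (2 * num w + 0).+1 = (2 * num w).+1 by lia.
  by rewrite addn0 stern_dblS stern_dbl.
Qed.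

Lemma num_pos p : num (pos_bits p) = Pos.to_nat p.
Proof.
elim: p => [q IH|q IH|] //=; rewrite /num foldl_rcons -/(num _) IH;
  rewrite ?Pos2Nat.inj_xI ?Pos2Nat.inj_xO; lia.
Qed.

Lemma num_bin h : num (bin h) = h.
Proof.
rewrite /bin; case E: (N.of_nat h) => [|p].
- by have -> : h = 0 by lia.
- rewrite num_pos; have := Nat2N.id h; rewrite E /=; lia.
Qed.

Lemma num_cat a b : num (a ++ b) = num a * 2 ^ size b + num b.
Proof.
elim/last_ind: b => [|b x IH]; first by rewrite cats0 /= muln1 addn0.
rewrite -rcons_cat /num !foldl_rcons -!/(num _) IH size_rcons expnS; lia.
Qed.

Lemma foldl_mono (v w : nat * nat) q : v.1 <= w.1 -> v.2 <= w.2 ->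
  (foldl step v q).1 <= (foldl step w q).1 /\ (foldl step v q).2 <= (foldl step w q).2.
Proof.
elim: q v w => [|b q IH] v w h1 h2 //=.
apply: IH; case: b; rewrite /step /=; lia.
Qed.

Theorem mainTheorem7 (h : nat) :
  R h -> ~~ infix [:: true; false; false; false; false] (bin h).
Proof.
move=> Rh; apply/negP => /infixP [p [q Eb]].
set W' := [:: false; true; true; false; false].
set h' := num (p ++ W' ++ q).
have Hh : h = num (p ++ [:: true; false; false; false; false] ++ q) by rewrite -Eb num_bin.
have lt : h' < h.
  rewrite Hh /h' !num_cat /=.
  have : 0 < 2 ^ size q by rewrite expn_gt0.
  have -> : num W' = 12 by []. have -> : num [:: true; false; false; false; false] = 16 by [].
  move: (2 ^ size q) (2 ^ (size q).+1.+4) => t u; nia.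
have := Rh _ lt; rewrite /s.
have E1 := F_num (p ++ W' ++ q).
have E2 := F_num (p ++ [:: true; false; false; false; false] ++ q).
rewrite -Hh in E2.
move: E1 E2; rewrite /F !foldl_cat => E1 E2.
set v := foldl step (0, 1) p in E1 E2.
have [_ H] : _ /\ _ := @foldl_mono (foldl step v [:: true; false; false; false; false])
   (foldl step v W') q ltac:(rewrite /= /step /=; lia) ltac:(rewrite /= /step /=; lia).
have -> : stern h.+1 = (foldl step (foldl step v [:: true; false; false; false; false]) q).2
  by rewrite -E2.
have -> : stern h'.+1 = (foldl step (foldl step v W') q).2 by rewrite -E1.
rewrite ltnNge; by apply/negP; rewrite negbK.
Qed.
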